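(* Let $\mu>0$, $\tau>0$, $\kappa>0$, $n\in\mathbb N$ be fixed and let $\Delta(\lambda,\alpha)=1-(1-\ln\alpha)e^{-\lambda\tau}(1+\frac{\lambda}{\mu+\kappa})^{-n-1}$. For $k\in\mathbb N$ let $\omega_k>0$ be the unique solution of $\omega\tau+(n+1)\arctan\frac{\omega}{\mu+\kappa}=\pi+2k\pi$ and $\alpha_k=\exp\big(1+(1+\omega_k^2/(\mu+\kappa)^2)^{(n+1)/2}\big)$, so that $\Delta(\pm i\omega_k,\alpha_k)=0$. Then for each $k\ge0$ there exist $\rho_k>0$ and a $C^1$ map $\hat\lambda_k:(\alpha_k-\rho_k,\alpha_k+\rho_k)\to\mathbb C$ such that $\hat\lambda_k(\alpha_k)=i\omega_k$, $\Delta(\hat\lambda_k(\alpha),\alpha)=0$ for all $\alpha\in(\alpha_k-\rho_k,\alpha_k+\rho_k)$, and $$\operatorname{Re}\frac{d\hat\lambda_k}{d\alpha}(\alpha_k)>0.$$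
   Context: $\Delta$ is the characteristic function of the linearization at $\bar u(a)=\ln(\alpha)e^{-\mu a}$ of $\partial_tu+\partial_au=-\mu u$, $u(t,0)=\alpha f(\int_0^\infty\beta(a)u(t,a)\,da)$, $f(x)=xe^{-x}$, with $\beta(a)=C_0(a-\tau)^ne^{-\kappa(a-\tau)}\mathbf 1_{[\tau,\infty)}(a)$ normalized by $\int_0^\infty\beta(a)e^{-\mu a}da=1$. *)

(* Defs.v *)
From Stdlib Require Import Reals.
From Coquelicot Require Import Coquelicot.
Open Scope C_scope.

Definition Cexp (z : C) : C :=
  (exp (Re z) * cos (Im z), exp (Re z) * sin (Im z))%R.

Definition charDelta (mu tau kappa : R) (n : nat) (lam : C) (alpha : R) : C :=
  1 - RtoC (1 - ln alpha) * Cexp (- lam * RtoC tau)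
      * / Cpow (1 + lam / RtoC (mu + kappa)) (S n).

Definition alpha_of (mu kappa : R) (n : nat) (omega : R) : R :=
  exp (1 + Rpower (1 + omega ^ 2 / (mu + kappa) ^ 2) (INR (S n) / 2)).

(* Main.v *)
Require Import Defs.
From Stdlib Require Import Reals Lra Lia ClassicalEpsilon Ranalysis5.
From Coquelicot Require Import Coquelicot.
Open Scope R_scope.
Section S.
Open Scope R_scope.
Variables (c tau A N : R).
Definition thf (y : R) : R := (A - tau * y) / N.
Definition Xf (y : R) : R := y * cos (thf y) / sin (thf y) - c.
Definition Lf (y : R) : R := N * ln (y / (c * sin (thf y))) + tau * Xf y.
Definition dXf (y : R) : R := cos (thf y) / sin (thf y) + y * tau / (N * (sin (thf y))^2).
Definition dLf (y : R) : R := N / y + tau * (cos (thf y) / sin (thf y)) + tau * dXf y.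

Hypothesis Hc : 0 < c.
Hypothesis HN : 0 < N.

Lemma thf_der y : is_derive thf y (- tau / N).
Proof. unfold thf. auto_derive. lra. field. lra. Qed.
Lemma thf_ex y : ex_derive thf y.
Proof. eexists; apply thf_der. Qed.
Lemma thf_D y : Derive thf y = - tau / N.
Proof. apply is_derive_unique, thf_der. Qed.
Lemma thf_D' y : Derive (fun x => thf x) y = - tau / N.
Proof. apply is_derive_unique, thf_der. Qed.

Lemma trick y : 0 < sin (thf y) -> y * tau / (N * (sin (thf y))^2) = y * tau * (sin (thf y) * sin (thf y) + cos (thf y) * cos (thf y)) / (N * (sin (thf y))^2).
Proof. intros. pose proof (sin2_cos2 (thf y)). unfold Rsqr in *. rewrite H0. field. lra. Qed.

Lemma Xf_der y : 0 < sin (thf y) -> is_derive Xf y (dXf y).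
Proof.
intros Hs. unfold Xf, dXf in *.
auto_derive.
- repeat split; try apply thf_ex; lra.
- rewrite ?thf_D, ?thf_D', trick by auto. field; lra.
Qed.
Lemma Lf_der y : 0 < y -> 0 < sin (thf y) -> is_derive Lf y (dLf y).
Proof.
intros Hy Hs. unfold Lf, dLf, Xf, dXf in *.
auto_derive.
- repeat split; try apply thf_ex; try (apply Rgt_not_eq, Rmult_lt_0_compat; lra).
  apply Rmult_lt_0_compat. lra. apply Rinv_0_lt_compat, Rmult_lt_0_compat; lra.
- lra.
- rewrite ?thf_D, ?thf_D', trick by auto. field. repeat split; lra.
Qed.

Lemma dXf_pos y : 0 < y -> 0 < tau -> 0 < sin (thf y) -> 0 < cos (thf y) -> 0 < dXf y.
Proof.
intros Hy Ht Hs Hco. unfold dXf.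
apply Rplus_lt_0_compat.
- apply Rdiv_lt_0_compat; auto.
- apply Rdiv_lt_0_compat. apply Rmult_lt_0_compat; auto.
  apply Rmult_lt_0_compat; auto. apply pow_lt; auto.
Qed.
Lemma dLf_pos y : 0 < y -> 0 < tau -> 0 < sin (thf y) -> 0 < cos (thf y) -> 0 < dLf y.
Proof.
intros Hy Ht Hs Hco. pose proof (dXf_pos y Hy Ht Hs Hco). unfold dLf.
apply Rplus_lt_0_compat; [apply Rplus_lt_0_compat|].
- apply Rdiv_lt_0_compat; auto.
- apply Rmult_lt_0_compat; auto. apply Rdiv_lt_0_compat; auto.
- apply Rmult_lt_0_compat; auto.
Qed.
Lemma dXf_cont y : 0 < sin (thf y) -> continuous dXf y.
Proof.
intros Hs. apply (ex_derive_continuous dXf y). unfold dXf. auto_derive.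
repeat split; try apply thf_ex; try lra.
apply Rgt_not_eq, Rmult_lt_0_compat; auto. repeat apply Rmult_lt_0_compat; lra.
Qed.
Lemma dLf_cont y : 0 < y -> 0 < sin (thf y) -> continuous dLf y.
Proof.
intros Hy Hs. apply (ex_derive_continuous dLf y). unfold dLf, dXf. auto_derive.
repeat split; try apply thf_ex; try lra.
apply Rgt_not_eq, Rmult_lt_0_compat; auto. repeat apply Rmult_lt_0_compat; lra.
Qed.
End S.
Lemma incr_of_der (f df : R -> R) a b :
  (forall y, a <= y <= b -> is_derive f y (df y) /\ 0 < df y) ->
  forall x y, a <= x -> x < y -> y <= b -> f x < f y.
Proof.
intros H x y Hx Hxy Hy.
destruct (MVT_cor2 f df x y Hxy) as [z [Hz1 Hz2]].
- intros z Hz. apply is_derive_Reals. apply H; lra.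
- assert (0 < df z) by (apply H; lra).
  assert (0 < df z * (y - x)) by (apply Rmult_lt_0_compat; lra). lra.
Qed.

Lemma cont_of_der (f df : R -> R) y : is_derive f y (df y) -> continuity_pt f y.
Proof.
intros H. apply continuity_pt_filterlim. apply (ex_derive_continuous f y). eexists; eauto.
Qed.

Lemma inv_fun (f df : R -> R) a b : a < b ->
  (forall y, a <= y <= b -> is_derive f y (df y) /\ 0 < df y) ->
  exists g : R -> R,
   (forall t, f a <= t <= f b -> a <= g t <= b /\ f (g t) = t) /\
   (forall y, a <= y <= b -> g (f y) = y) /\
   (forall t, f a < t < f b -> continuity_pt g t /\ is_derive g t (1 / df (g t))).
Proof.
intros Hab Hd.
pose proof (incr_of_der f df a b Hd) as Hinc.
assert (Hc : forall y, a <= y <= b -> continuity_pt f y).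
{ intros y Hy. apply (cont_of_der f df). apply Hd; auto. }
set (g := fun t => epsilon (inhabits 0) (fun y => a <= y <= b /\ f y = t)).
assert (Hg : forall t, f a <= t <= f b -> a <= g t <= b /\ f (g t) = t).
{ intros t Ht. unfold g. apply epsilon_spec.
  destruct (f_interv_is_interv f a b t Hab Ht Hc) as [y Hy]. exists y; auto. }
assert (Hinj : forall x y, a <= x <= b -> a <= y <= b -> f x = f y -> x = y).
{ intros x y Hx Hy E. destruct (Rtotal_order x y) as [h|[h|h]]; auto.
  - pose proof (Hinc x y ltac:(lra) h ltac:(lra)); lra.
  - pose proof (Hinc y x ltac:(lra) h ltac:(lra)); lra. }
assert (Hgf : forall y, a <= y <= b -> g (f y) = y).
{ intros y Hy. assert (f a <= f y <= f b).
  { split; destruct (Req_dec y a); destruct (Req_dec y b); subst; try lra;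
    apply Rlt_le, Hinc; lra. }
  destruct (Hg (f y) H) as [H1 H2]. apply Hinj; auto. }
exists g. split; [exact Hg|split; [exact Hgf|]].
intros t Ht.
assert (Hfab : f a < f b) by (apply Hinc; lra).
assert (Hcg : continuity_pt g t).
{ apply (continuity_pt_recip_interv f g a b Hab).
  - intros; apply Hinc; lra.
  - intros x H1 H2. unfold comp, id. apply Hg; lra.
  - intros x H1 H2. apply Hg; lra.
  - exact Hc.
  - exact Ht. }
split; [exact Hcg|].
assert (Prf : forall a0, g (f a) <= a0 <= g (f b) -> derivable_pt f a0).
{ intros a0 Ha0. rewrite !Hgf in Ha0 by lra. exists (df a0).
  apply is_derive_Reals. apply Hd; lra. }
assert (Hgt : g (f a) <= g t <= g (f b)).
{ rewrite !Hgf by lra. apply Hg; lra. }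
pose proof (derivable_pt_lim_recip_interv f g (f a) (f b) t Prf Hcg Hfab Ht Hgt) as HH.
assert (E : derive_pt f (g t) (Prf (g t) Hgt) = df (g t)).
{ apply derive_pt_eq_0. apply is_derive_Reals. apply Hd. apply Hg; lra. }
rewrite E in HH. apply is_derive_Reals. apply HH.
- intros x Hx. unfold comp, id. apply Hg; lra.
- assert (0 < df (g t)) by (apply Hd; apply Hg; lra). lra.
Qed.
Lemma is_derive_pair (f g : R -> R) x df dg :
  is_derive f x df -> is_derive g x dg ->
  @is_derive R_AbsRing (prod_NormedModule R_AbsRing R_NormedModule R_NormedModule) (fun t => (f t, g t)) x (df, dg).
Proof.
intros Hf Hg.
assert (H1 := is_derive_scal_l (V := prod_NormedModule R_AbsRing R_NormedModule R_NormedModule) f x df (1, 0) Hf).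
assert (H2 := is_derive_scal_l (V := prod_NormedModule R_AbsRing R_NormedModule R_NormedModule) g x dg (0, 1) Hg).
assert (H3 := is_derive_plus _ _ _ _ _ H1 H2).
eapply is_derive_ext; [|eapply (is_derive_ext _ _ _ _ (fun t => eq_refl))].
2: { replace (df, dg) with (plus (scal df (1, 0)) (scal dg (0, 1))). exact H3.
     apply injective_projections; simpl; unfold plus, scal; simpl; unfold mult, plus; simpl; ring. }
intros t. apply injective_projections; simpl; unfold plus, scal; simpl; unfold mult, plus; simpl; ring.
Qed.

Lemma continuous_pair (f g : R -> R) x :
  continuous f x -> continuous g x -> @continuous R_UniformSpace (prod_UniformSpace R_UniformSpace R_UniformSpace) (fun t => (f t, g t)) x.
Proof.
intros Hf Hg.
apply (continuous_comp_2 f g pair x Hf Hg).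
apply (continuous_ext (fun y : R * R => y)). intros [u v]; reflexivity.
apply continuous_id.
Qed.

Open Scope C_scope.
Lemma Cexp_lin x y t : Cexp (- (x, y) * RtoC t) = (exp (-(x*t)) * cos (y*t), -(exp (-(x*t)) * sin (y*t)))%R.
Proof.
unfold Cexp. 
replace (- (x, y) * RtoC t) with ((-(x*t))%R, (-(y*t))%R).
- apply injective_projections; simpl; rewrite ?cos_neg, ?sin_neg; ring.
- apply injective_projections; simpl; ring.
Qed.

Lemma demoivre r t m : Cpow ((r * cos t)%R, (r * sin t)%R) m = ((r^m * cos (INR m * t))%R, (r^m * sin (INR m * t))%R).
Proof.
induction m.
- simpl. apply injective_projections; simpl; rewrite ?Rmult_0_l, ?cos_0, ?sin_0; ring.
- rewrite Cpow_S, IHm. rewrite S_INR.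
  replace ((INR m + 1) * t)%R with (t + INR m * t)%R by ring.
  rewrite cos_plus, sin_plus. apply injective_projections; simpl; ring.
Qed.

Lemma div_real x y c : (c <> 0)%R -> 1 + (x, y) / RtoC c = ((1 + x / c)%R, (y / c)%R).
Proof.
intros Hc. apply injective_projections; simpl; field; auto.
Qed.

Lemma charDelta_zero mu tau kappa n k y a :
  (0 < mu + kappa)%R -> (0 < y)%R ->
  (0 < sin (thf tau (PI + 2 * INR k * PI) (INR (S n)) y))%R ->
  (ln a - 1 = exp (Lf (mu + kappa) tau (PI + 2 * INR k * PI) (INR (S n)) y))%R ->
  charDelta mu tau kappa n ((Xf (mu + kappa) tau (PI + 2 * INR k * PI) (INR (S n)) y), y) a = 0.
Proof.
intros Hc Hy Hs Ha.
set (A := (PI + 2 * INR k * PI)%R) in *.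
set (N := INR (S n)) in *.
set (c := (mu + kappa)%R) in *.
set (th := thf tau A N y) in *.
set (r := (y / (c * sin th))%R).
assert (Hr : (0 < r)%R). { unfold r. apply Rdiv_lt_0_compat; auto. apply Rmult_lt_0_compat; auto. }
assert (HN : (0 < N)%R) by (apply lt_0_INR; lia).
set (X := Xf c tau A N y) in *.
assert (E1 : 1 + (X, y) / RtoC c = ((r * cos th)%R, (r * sin th)%R)).
{ rewrite div_real by lra. unfold X, Xf, r. fold th. apply injective_projections; simpl; field; lra. }
assert (Eth : (INR (S n) * th = (PI - tau * y) + 2 * INR k * PI)%R).
{ unfold th, thf. fold N. unfold A. field. lra. }
assert (E3 : (1 - ln a = - (r ^ (S n) * exp (tau * X)))%R).
{ assert (ln a = 1 + exp (Lf c tau A N y))%R by lra. rewrite H.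
  unfold Lf. fold th. fold r. fold X. rewrite exp_plus.
  rewrite <- (Rpower_pow (S n) r Hr). unfold Rpower. fold N. ring. }
assert (HP : ((r * cos th)%R, (r * sin th)%R) <> RtoC 0).
{ intro H. apply (f_equal snd) in H. simpl in H.
  assert (0 < r * sin th)%R by (apply Rmult_lt_0_compat; auto). lra. }
unfold charDelta. fold c. rewrite E1. rewrite E3. rewrite Cexp_lin.
assert (EP : RtoC (- (r ^ S n * exp (tau * X)))
     * ((exp (- (X * tau)) * cos (y * tau))%R, (- (exp (- (X * tau)) * sin (y * tau)))%R)
     = ((r * cos th)%R, (r * sin th)%R) ^ S n).
{ rewrite demoivre. rewrite Eth. rewrite cos_period, sin_period.
  rewrite cos_minus, sin_minus, cos_PI, sin_PI. rewrite exp_Ropp.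
  assert (0 < exp (X * tau))%R by apply exp_pos.
  replace (tau * X)%R with (X * tau)%R by ring.
  replace (tau * y)%R with (y * tau)%R by ring.
  apply injective_projections; simpl; field; lra. }
rewrite EP. rewrite Cinv_r by (apply Cpow_nz; auto).
apply injective_projections; simpl; ring.
Qed.

Theorem theorem7p3 (mu tau kappa : R) (n k : nat) (omega : R) :
  (0 < mu)%R -> (0 < tau)%R -> (0 < kappa)%R ->
  (0 < omega)%R ->
  (omega * tau + INR (S n) * atan (omega / (mu + kappa)) = PI + 2 * INR k * PI)%R ->
  let alpha := alpha_of mu kappa n omega in
  exists (rho : R) (lam lam' : R -> C),
    (0 < rho)%R /\
    (forall a : R, (alpha - rho < a < alpha + rho)%R ->
       is_derive lam a (lam' a) /\ continuous lam' a) /\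
    lam alpha = (0, omega)%R /\
    (forall a : R, (alpha - rho < a < alpha + rho)%R ->
       charDelta mu tau kappa n (lam a) a = 0) /\
    (0 < Re (lam' alpha))%R.
Proof.
intros Hmu Htau Hkap Hom Hk alpha.
Open Scope R_scope.
assert (Hc : 0 < mu + kappa) by lra.
set (c := mu + kappa) in *.
set (A := PI + 2 * INR k * PI) in *.
set (N := INR (S n)) in *.
assert (HN : 0 < N) by (apply lt_0_INR; lia).
set (th0 := atan (omega / c)) in *.
assert (Hth0 : 0 < th0 < PI / 2).
{ pose proof (atan_bound (omega / c)). split; [|unfold th0; lra].
  rewrite <- atan_0. apply atan_increasing. apply Rdiv_lt_0_compat; auto. }
assert (Hthy : forall y, thf tau A N y * N = N * th0 - tau * (y - omega)).
{ intros y. unfold thf. rewrite <- Hk. field. lra. }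
set (d := Rmin (omega / 2) (Rmin (N * th0 / (2 * tau)) (N * (PI / 2 - th0) / (2 * tau)))).
assert (Hd1 : d <= omega / 2) by apply Rmin_l.
assert (Hd2 : tau * d <= N * th0 / 2).
{ assert (d <= N * th0 / (2 * tau)) by (eapply Rle_trans; [apply Rmin_r|apply Rmin_l]).
  replace (N * th0 / 2) with (tau * (N * th0 / (2 * tau))) by (field; lra).
  apply Rmult_le_compat_l; lra. }
assert (Hd3 : tau * d <= N * (PI / 2 - th0) / 2).
{ assert (d <= N * (PI / 2 - th0) / (2 * tau)) by (eapply Rle_trans; [apply Rmin_r|apply Rmin_r]).
  replace (N * (PI / 2 - th0) / 2) with (tau * (N * (PI / 2 - th0) / (2 * tau))) by (field; lra).
  apply Rmult_le_compat_l; lra. }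
assert (Hdpos : 0 < d).
{ unfold d. apply Rmin_glb_lt; [lra|apply Rmin_glb_lt].
  - apply Rdiv_lt_0_compat; [apply Rmult_lt_0_compat|]; lra.
  - apply Rdiv_lt_0_compat; [apply Rmult_lt_0_compat|]; lra. }
assert (Hgood : forall y, omega - d <= y <= omega + d ->
   0 < y /\ 0 < sin (thf tau A N y) /\ 0 < cos (thf tau A N y)).
{ intros y Hy. pose proof (Hthy y) as E.
  assert (tau * (y - omega) <= tau * d) by (apply Rmult_le_compat_l; lra).
  assert (- (tau * d) <= tau * (y - omega)) by nra.
  assert (0 < thf tau A N y) by nra.
  assert (thf tau A N y < PI / 2) by nra.
  split; [lra|split].
  - apply sin_gt_0; lra.
  - apply cos_gt_0; lra. }

assert (Hder : forall y, omega - d <= y <= omega + d ->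
   is_derive (Lf c tau A N) y (dLf tau A N y) /\ 0 < dLf tau A N y).
{ intros y Hy. destruct (Hgood y Hy) as [H1 [H2 H3]]. split.
  - apply Lf_der; auto.
  - apply dLf_pos; auto. }
destruct (inv_fun (Lf c tau A N) (dLf tau A N) (omega - d) (omega + d) ltac:(lra) Hder)
  as [g [Hg1 [Hg2 Hg3]]].
pose proof (incr_of_der _ _ _ _ Hder) as Hinc.
set (lb := Lf c tau A N (omega - d)).
set (ub := Lf c tau A N (omega + d)).
assert (Hlb : lb < Lf c tau A N omega) by (apply Hinc; lra).
assert (Hub : Lf c tau A N omega < ub) by (apply Hinc; lra).
assert (Hthw : thf tau A N omega = th0).
{ pose proof (Hthy omega) as E. apply (Rmult_eq_reg_r N); [|lra]. rewrite E. ring. }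
assert (HX0 : Xf c tau A N omega = 0).
{ unfold Xf. rewrite Hthw. unfold th0. rewrite cos_atan, sin_atan.
  assert (0 < sqrt (1 + (omega / c)²)).
  { apply sqrt_lt_R0. pose proof (Rle_0_sqr (omega / c)). lra. }
  assert (0 < omega / c) by (apply Rdiv_lt_0_compat; auto).
  field. repeat split; lra. }
assert (HL0 : Lf c tau A N omega = N / 2 * ln (1 + omega ^ 2 / c ^ 2)).
{ unfold Lf. rewrite HX0, Hthw. unfold th0. rewrite sin_atan.
  set (s := sqrt (1 + (omega / c)²)).
  assert (Hs : 0 < s).
  { apply sqrt_lt_R0. pose proof (Rle_0_sqr (omega / c)). lra. }
  replace (omega / (c * (omega / c / s))) with s by (field; lra).
  assert (E : 1 + omega ^ 2 / c ^ 2 = s * s).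
  { unfold s. rewrite sqrt_sqrt. unfold Rsqr. field. lra.
    pose proof (Rle_0_sqr (omega / c)). lra. }
  rewrite E, ln_mult by auto. field. }
assert (Halpha : alpha = exp (1 + exp (Lf c tau A N omega))).
{ unfold alpha, alpha_of. fold c. fold N. rewrite HL0. unfold Rpower. reflexivity. }

set (T := fun a => ln (ln a - 1)).
set (dT := fun a => / a * / (ln a - 1)).
set (dG := fun a => dT a * (1 / dLf tau A N (g (T a)))).
set (rho := Rmin (alpha - exp (1 + exp lb)) (exp (1 + exp ub) - alpha)).
assert (Hrho : 0 < rho).
{ unfold rho. rewrite Halpha. apply Rmin_glb_lt.
  - assert (exp (1 + exp lb) < exp (1 + exp (Lf c tau A N omega))).
    { apply exp_increasing. apply Rplus_lt_compat_l. apply exp_increasing. auto. } lra.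
  - assert (exp (1 + exp (Lf c tau A N omega)) < exp (1 + exp ub)).
    { apply exp_increasing. apply Rplus_lt_compat_l. apply exp_increasing. auto. } lra. }
assert (Hint : forall a, alpha - rho < a < alpha + rho ->
   0 < a /\ 0 < ln a - 1 /\ lb < T a < ub).
{ intros a Ha.
  assert (Ha1 : exp (1 + exp lb) < a).
  { assert (rho <= alpha - exp (1 + exp lb)) by apply Rmin_l. lra. }
  assert (Ha2 : a < exp (1 + exp ub)).
  { assert (rho <= exp (1 + exp ub) - alpha) by apply Rmin_r. lra. }
  assert (Ha0 : 0 < a) by (pose proof (exp_pos (1 + exp lb)); lra).
  assert (L1 : 1 + exp lb < ln a).
  { rewrite <- (ln_exp (1 + exp lb)). apply ln_increasing; auto. apply exp_pos. }
  assert (L2 : ln a < 1 + exp ub).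
  { rewrite <- (ln_exp (1 + exp ub)). apply ln_increasing; auto. }
  pose proof (exp_pos lb).
  split; [auto|split; [lra|]]. unfold T. split.
  - rewrite <- (ln_exp lb) at 1. apply ln_increasing; auto. lra.
  - rewrite <- (ln_exp ub). apply ln_increasing; [lra|]. lra. }
assert (HgT : forall a, alpha - rho < a < alpha + rho ->
   omega - d <= g (T a) <= omega + d /\ Lf c tau A N (g (T a)) = T a).
{ intros a Ha. destruct (Hint a Ha) as [_ [_ H]]. apply Hg1. unfold lb, ub in H. lra. }
assert (HTder : forall a, 0 < a -> 0 < ln a - 1 -> is_derive T a (dT a)).
{ intros a H1 H2. unfold T, dT. auto_derive. lra. field. lra. }
assert (HTalpha : T alpha = Lf c tau A N omega).
{ unfold T. rewrite Halpha, ln_exp. replace (1 + exp (Lf c tau A N omega) - 1) with (exp (Lf c tau A N omega)) by ring.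
  apply ln_exp. }
assert (Halpha_in : alpha - rho < alpha < alpha + rho) by lra.
assert (HgTalpha : g (T alpha) = omega) by (rewrite HTalpha; apply Hg2; lra).
exists rho, (fun a => (Xf c tau A N (g (T a)), g (T a))),
  (fun a => (dG a * dXf tau A N (g (T a)), dG a)).
split; [exact Hrho|].
split; [|split; [|split]].
- intros a Ha.
  destruct (Hint a Ha) as [Ha0 [Ha1 Ha2]].
  destruct (HgT a Ha) as [Hy1 Hy2].
  destruct (Hgood _ Hy1) as [Hp1 [Hp2 Hp3]].
  assert (HgTa : lb < T a < ub) by exact Ha2.
  destruct (Hg3 (T a) HgTa) as [Hgc Hgd].
  assert (D1 : is_derive (fun a => g (T a)) a (dG a)).
  { apply (is_derive_comp g T a _ _ Hgd (HTder a Ha0 Ha1)). }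
  assert (D2 : is_derive (fun a => Xf c tau A N (g (T a))) a (dG a * dXf tau A N (g (T a)))).
  { apply (is_derive_comp (Xf c tau A N) (fun a => g (T a)) a _ _ (Xf_der _ _ _ _ HN _ Hp2) D1). }
  assert (CT : continuous T a).
  { apply (ex_derive_continuous T a). eexists. apply HTder; auto. }
  assert (Cg : continuous (fun a => g (T a)) a).
  { apply (continuous_comp T g a CT). apply continuity_pt_filterlim. exact Hgc. }
  assert (CdG : continuous dG a).
  { unfold dG. apply (continuous_mult dT (fun a => 1 / dLf tau A N (g (T a)))).
    - apply (ex_derive_continuous dT a). unfold dT. auto_derive. repeat split; lra.
    - assert (Eq : forall x, / dLf tau A N (g (T x)) = 1 / dLf tau A N (g (T x))) by (intros; unfold Rdiv; ring).
      apply (continuous_ext _ _ a Eq).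
      apply continuous_Rinv_comp.
      + apply (continuous_comp (fun a => g (T a)) (dLf tau A N) a Cg).
        apply dLf_cont; auto.
      + apply Rgt_not_eq, dLf_pos; auto. }
  split.
  + apply (is_derive_pair _ _ a _ _ D2 D1).
  + apply (continuous_pair (fun a => dG a * dXf tau A N (g (T a))) dG a); [|exact CdG].
    apply (continuous_mult dG (fun a => dXf tau A N (g (T a))) a CdG).
    apply (continuous_comp (fun a => g (T a)) (dXf tau A N) a Cg).
    apply dXf_cont; auto.
- simpl. rewrite HgTalpha, HX0. reflexivity.
- intros a Ha. destruct (Hint a Ha) as [Ha0 [Ha1 Ha2]].
  destruct (HgT a Ha) as [Hy1 Hy2].
  destruct (Hgood _ Hy1) as [Hp1 [Hp2 Hp3]].
  apply charDelta_zero; auto.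
  change (ln a - 1 = exp (Lf c tau A N (g (T a)))). rewrite Hy2. unfold T. rewrite exp_ln; auto.
- simpl. rewrite HgTalpha.
  assert (Ho : omega - d <= omega <= omega + d) by lra.
  destruct (Hgood _ Ho) as [Hp1 [Hp2 Hp3]].
  destruct (Hint alpha Halpha_in) as [Ha0 [Ha1 Ha2]].
  unfold dG. rewrite HgTalpha.
  pose proof (dXf_pos _ _ _ HN _ Hp1 Htau Hp2 Hp3).
  pose proof (dLf_pos _ _ _ HN _ Hp1 Htau Hp2 Hp3).
  assert (0 < dT alpha).
  { unfold dT. apply Rmult_lt_0_compat; apply Rinv_0_lt_compat; auto. }
  apply Rmult_lt_0_compat; auto. apply Rmult_lt_0_compat; auto.
  apply Rdiv_lt_0_compat; lra.
Qed.
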